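(* Let $W=I_2(m)$, $m\ge3$. Writing $X^{(m)}_{\alpha\ldots}=\sum_{w\in W}q_w\delta_w$ with $q_w\in\mathcal{Q}$, the coefficient $c^{(m-2)}_{\alpha,\beta}$ of $\delta^{(m-2)}_{\alpha\ldots}$ equals $$c^{(m-2)}_{\alpha,\beta}=\begin{cases}\ \ \upsilon^{(2)}_\alpha\,S^{(0,m-2)}_\alpha(y_\alpha y_\beta),& m\text{ even},\\ -\upsilon^{(2)}_\alpha\,S^{(0,m-2)}_\alpha(y_\alpha y_\beta),& m\text{ odd}.\end{cases}$$ Symmetrically (interchanging $\alpha$ and $\beta$), the coefficient $c^{(m-2)}_{\beta,\alpha}$ of $\delta^{(m-2)}_{\beta\ldots}$ in $X^{(m)}_{\beta\ldots}$ is given by the same formula with $\alpha$ and $\beta$ interchanged.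
   Context: General setup: $W$ a finite real reflection group with root system $\Sigma$; $R$ an integral domain containing the ring $\mathcal{R}\subset\mathbb{R}$ generated by the coefficients of roots in the basis of simple roots; $F$ a one-dimensional commutative formal group law over $R$; $\mathcal{S}$ the formal root algebra (the quotient of the completed polynomial ring $R[[x_\lambda:\lambda\in\Lambda]]$, $\Lambda$ the lattice spanned by $\mathcal{R}$-multiples of roots, by the closed ideal generated by $x_0$ and the relations $x_{e_i\gamma+e_j\gamma'}=(e_ix_\gamma)+_F(e_jx_{\gamma'})$ for roots $\gamma,\gamma'$ and a fixed $\mathbb{Z}$-basis $(e_1=1,\dots,e_l)$ of $\mathcal{R}$), with $W$ acting by $w(x_\lambda)=x_{w(\lambda)}$; $\mathcal{Q}$ its localization at all $x_\gamma$; $\mathcal{Q}_W=\mathcal{Q}\otimes_RR[W]$ with left $\mathcal{Q}$-basis $\{\delta_w\}$ and product $(q\delta_w)(q'\delta_{w'})=q\,w(q')\delta_{ww'}$, $\mathbf 1=\delta_1$; $\delta_\gamma=\delta_{s_\gamma}$, $X_\gamma=\frac1{x_\gamma}(\mathbf 1-\delta_\gamma)$. Dihedral notation: $W=I_2(m)$, simple roots $\alpha,\beta$; $y_\gamma=1/x_\gamma\in\mathcal{Q}$; $W$ acts on products multiplicatively, e.g. $s(y_\alpha y_\beta)=s(y_\alpha)s(y_\beta)$, $s(y_\gamma)=y_{s(\gamma)}$. $X^{(i)}_{\alpha\ldots}=X_\alpha X_\beta X_\alpha\cdots$ ($i$ alternating factors), $X^{(i)}_{\beta\ldots}$, $\delta^{(i)}_{\alpha\ldots}=\delta_\alpha\delta_\beta\cdots$,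 $\delta^{(i)}_{\beta\ldots}$, $s^{(i)}_{\alpha\ldots}=s_\alpha s_\beta\cdots$, $s^{(i)}_{\beta\ldots}$ ($i$ factors; $i=0$ gives $\mathbf 1$ / identity). $\omega_j=\alpha$ for $j$ even, $\omega_j=\beta$ for $j$ odd. For $0\le i\le m-1$: $\upsilon^{(i)}_\alpha=\prod_{j=0}^{m-i-1}s^{(j)}_{\alpha\ldots}(y_{\omega_j})$ and $\upsilon^{(i)}_\beta=\prod_{j=0}^{m-i-1}s^{(j)}_{\beta\ldots}(y_{\omega_{j+1}})$ (empty product $=1$). For $i\le j$: $S^{(i,j)}_\alpha(u)=\sum_{k=i}^js^{(k)}_{\alpha\ldots}(u)$, $S^{(i,j)}_\beta(u)=\sum_{k=i}^js^{(k)}_{\beta\ldots}(u)$; an empty range ($j<i$) gives $0$. *)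

(* Defs.v *)
From HB Require Import structures.
From mathcomp Require Import all_boot all_order all_algebra all_fingroup.
Set Implicit Arguments. Unset Strict Implicit. Unset Printing Implicit Defensive.
Import GRing.Theory.
Local Open Scope ring_scope.

Definition ring_action (W : finGroupType) (Q : comUnitRingType)
    (act : W -> Q -> Q) : Prop :=
  [/\ forall w a b, act w (a + b) = act w a + act w b,
      forall w a b, act w (a * b) = act w a * act w b,
      forall w, act w 1 = 1,
      forall a, act 1%g a = a
    & forall u v a, act (u * v)%g a = act u (act v a)].

(* The twisted group ring Q_W = Q (x) R[W]: an element sum_w q_w delta_w is
   the finite function w |-> q_w.  Product: (q d_u)(q' d_v) = q u(q') d_{uv}. *)
Definition QW (W : finGroupType) (Q : comUnitRingType) := {ffun W -> Q}.

Definition tmul (W : finGroupType) (Q : comUnitRingType) (act : W -> Q -> Q)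
    (f g : QW W Q) : QW W Q :=
  [ffun w => \sum_(u : W) f u * act u (g (u^-1 * w)%g)].

Definition delta (W : finGroupType) (Q : comUnitRingType) (w0 : W) : QW W Q :=
  [ffun w => if w == w0 then 1 else 0].

Definition XX (W : finGroupType) (Q : comUnitRingType) (x : Q) (s : W) : QW W Q :=
  [ffun w => x^-1 * (delta Q 1%g w - delta Q s w)].

Fixpoint sword (W : finGroupType) (i : nat) (s t : W) : W :=
  if i is i'.+1 then (s * sword i' t s)%g else 1%g.

Fixpoint Xalt (W : finGroupType) (Q : comUnitRingType) (act : W -> Q -> Q)
    (i : nat) (xa xb : Q) (sa sb : W) : QW W Q :=
  if i is i'.+1 then tmul act (XX xa sa) (Xalt act i' xb xa sb sa)
  else delta Q 1%g.

Definition upsilon (W : finGroupType) (Q : comUnitRingType) (act : W -> Q -> Q)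
    (m i : nat) (ys yt : Q) (s t : W) : Q :=
  \prod_(j < m - i) act (sword j s t) (if odd j then yt else ys).

(* S^{(i,j)}(u) = sum_{k=i}^{j} (s t s ...)^{(k)} (u); 0 if j < i *)
Definition Ssum (W : finGroupType) (Q : comUnitRingType) (act : W -> Q -> Q)
    (i j : nat) (s t : W) (u : Q) : Q :=
  \sum_(i <= k < j.+1) act (sword k s t) u.

(* Main.v *)
Require Import Defs.
From HB Require Import structures.
From mathcomp Require Import all_boot all_order all_algebra all_fingroup.
From mathcomp Require Import cyclic zify ring.
Import GRing.Theory.
Local Open Scope ring_scope.
Set Implicit Arguments. Unset Strict Implicit. Unset Printing Implicit Defensive.

Lemma swA (W : finGroupType) (s t : W) (j : nat) :
  sword j s t = ((s*t)^+(j./2) * s^+(odd j))%g.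
Proof.
suff: sword j s t = ((s*t)^+(j./2) * s^+(odd j))%g /\
      sword j.+1 s t = ((s*t)^+(j.+1./2) * s^+(odd j.+1))%g by case.
elim: j => [|j [IH IH1]]; first by split; rewrite /= ?expg0 ?expg1 ?mulg1 ?mul1g.
split; first exact: IH1.
rewrite [sword j.+2 s t]/= mulgA IH mulgA -expgS /=.
by rewrite negbK.
Qed.

Lemma inv_inv (W : finGroupType) (s : W) : (s * s = 1)%g -> (s^-1 = s)%g.
Proof. by move=> h; apply/eqP; rewrite eq_invg_mul h. Qed.

Lemma swB (W : finGroupType) (s t : W) (j : nat) :
  (s * s = 1)%g -> (t * t = 1)%g ->
  sword j t s = (((s*t)^+(j./2 + odd j))^-1 * s^+(odd j))%g.
Proof.
move=> hs ht.
have e1 : ((s*t)^-1 = t * s)%g by rewrite invgM !inv_inv.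
have e2 : (t = (s*t)^-1 * s)%g by rewrite e1 -mulgA hs mulg1.
suff: sword j t s = (((s*t)^+(j./2 + odd j))^-1 * s^+(odd j))%g /\
      sword j.+1 t s = (((s*t)^+(j.+1./2 + odd j.+1))^-1 * s^+(odd j.+1))%g by case.
elim: j => [|j [IH IH1]].
  split; first by rewrite /= expg0 invg1 mulg1.
  by rewrite /= expg1 mulg1.
split; first exact: IH1.
rewrite [sword j.+2 t s]/= mulgA IH mulgA -e1 /= negbK.
congr (_ * _)%g.
by rewrite addSn expgSr [RHS]invgM.
Qed.

Lemma NotIn (W : finGroupType) (s t : W) (m : nat) :
  (s * s = 1)%g -> (t * t = 1)%g -> #[(s*t)%g]%g = m -> (3 <= m)%N ->
  s \notin <[(s*t)%g]>%g.
Proof.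
move=> hs ht ho hm; apply/negP => /cycleP [n hn].
have c : (s * (s * t) = (s * t) * s)%g by rewrite {1 4}hn -expgS -expgSr.
have e1 : ((s*t)^-1 = t * s)%g by rewrite invgM !inv_inv.
have e3 : (t * s = s * t)%g.
  transitivity ((s * (s * t)) * s)%g; first by rewrite mulgA hs mul1g.
  by rewrite c -mulgA hs mulg1.
have : ((s*t)^+2 == 1)%g by rewrite expgS expg1 -{1}e3 -e1 mulVg.
rewrite -order_dvdn ho => /dvdn_leq; lia.
Qed.

Lemma Kinj (W : finGroupType) (s t : W) (m : nat) (u v : W) (b a : bool) :
  (s * s = 1)%g -> (t * t = 1)%g -> #[(s*t)%g]%g = m -> (3 <= m)%N ->
  u \in <[(s*t)%g]>%g -> v \in <[(s*t)%g]>%g ->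
  (u * s ^+ b = v * s ^+ a)%g -> b = a /\ u = v.
Proof.
move=> hs ht ho hm hu hv.
have ni := NotIn hs ht ho hm.
case: b; case: a => /= e; rewrite ?expg1 ?expg0 ?mulg1 in e.
- by split => //; move: e => /(mulIg s).
- by case/negP: ni; move: (groupM (groupVr hu) hv); rewrite -e mulKg.
- by case/negP: ni; move: (groupM (groupVr hv) hu); rewrite e mulKg.
- by [].
Qed.

Lemma Rne (W : finGroupType) (r : W) (m p q : nat) :
  #[r]%g = m -> (p < q)%N -> (q < m)%N -> (r ^+ q != r ^+ p)%g.
Proof.
move=> ho hpq hqm; rewrite eq_expg_mod_order ho !modn_small //; first lia.
exact: ltn_trans hqm.
Qed.

Lemma Dist (W : finGroupType) (s t : W) (m j k : nat) :
  (s * s = 1)%g -> (t * t = 1)%g -> #[(s*t)%g]%g = m -> (3 <= m)%N ->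
  (j < k)%N -> (k < m)%N ->
  sword k s t != sword j s t /\ sword k s t != sword j t s.
Proof.
move=> hs ht ho hm hjk hkm.
have hj := odd_double_half j; have hk := odd_double_half k.
rewrite (swA s t k) (swA s t j) (swB j hs ht); split; apply/negP => /eqP e.
- have [eo ep] := @Kinj _ s t m _ _ _ _ hs ht ho hm (mem_cycle _ _) (mem_cycle _ _) e.
  move: ep; apply/eqP; apply: (Rne ho) => //; rewrite -?muln2 in hj hk.
  + move: eo hj hk hjk; case: (odd k); case: (odd j) => //= _; lia.
  + lia.
- have [eo ep] := @Kinj _ s t m _ _ _ _ hs ht ho hm (mem_cycle _ _) (groupVr (mem_cycle _ _)) e.
  have : ((s*t) ^+ (k./2 + (j./2 + odd j)) == (s*t) ^+ 0)%g.
    by rewrite expgD ep mulVg expg0.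
  apply/negP; apply: (Rne ho); rewrite -?muln2 in hj hk;
  move: eo hj hk hjk hkm; case: (odd k); case: (odd j) => //= _; lia.
Qed.

Lemma act0 (W : finGroupType) (Q : comUnitRingType) (act : W -> Q -> Q) w :
  ring_action act -> act w 0 = 0.
Proof. by case=> hadd _ _ _ _; apply: (addrI (act w 0)); rewrite -hadd !addr0. Qed.

Lemma actN (W : finGroupType) (Q : comUnitRingType) (act : W -> Q -> Q) w a :
  ring_action act -> act w (- a) = - act w a.
Proof.
move=> ha; have [hadd _ _ _ _] := ha.
by apply/eqP; rewrite -addr_eq0 -hadd addNr act0.
Qed.

Lemma actS (W : finGroupType) (Q : comUnitRingType) (act : W -> Q -> Q) w n (F : nat -> Q) :
  ring_action act -> act w (\sum_(0 <= k < n) F k) = \sum_(0 <= k < n) act w (F k).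
Proof.
move=> ha; have [hadd _ _ _ _] := ha.
exact: (big_morph (act w) (hadd w) (act0 w ha)).
Qed.

Lemma actP (W : finGroupType) (Q : comUnitRingType) (act : W -> Q -> Q) w n (F : 'I_n -> Q) :
  ring_action act -> act w (\prod_(k < n) F k) = \prod_(k < n) act w (F k).
Proof.
move=> ha; have [_ hmul h1 _ _] := ha.
exact: (big_morph (act w) (hmul w) (h1 w)).
Qed.

Lemma actS1 (W : finGroupType) (Q : comUnitRingType) (act : W -> Q -> Q) w n :
  ring_action act -> act w ((-1) ^+ n) = (-1) ^+ n.
Proof.
move=> ha; have [_ hmul h1 _ _] := ha.
elim: n => [|n IH]; first by rewrite !expr0 h1.
by rewrite !exprS hmul IH actN // h1.
Qed.

Lemma sum_delta (W : finGroupType) (Q : comUnitRingType) (c : Q) (v : W) (F : W -> Q) :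
  \sum_(u : W) c * delta Q v u * F u = c * F v.
Proof.
rewrite (bigD1 v) //= big1 => [|u hu]; rewrite /delta ffunE ?eqxx ?(negbTE hu).
  by rewrite mulr1 addr0.
by rewrite mulr0 mul0r.
Qed.

Lemma Xrec (W : finGroupType) (Q : comUnitRingType) (act : W -> Q -> Q) i xs xt s t w :
  ring_action act ->
  Xalt act i.+1 xs xt s t w = xs^-1 * Xalt act i xt xs t s w
     - xs^-1 * act s (Xalt act i xt xs t s (s^-1 * w)%g).
Proof.
move=> ha; have [_ _ _ hid _] := ha.
rewrite [Xalt _ _.+1 _ _ _ _]/= /tmul ffunE.
under eq_bigr => u _ do rewrite /XX ffunE mulrBr mulrBl.
rewrite sumrB !sum_delta invg1 mul1g hid.
by [].
Qed.

Lemma Supp (W : finGroupType) (Q : comUnitRingType) (act : W -> Q -> Q) i :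
  ring_action act -> forall s t xs xt w, (s * s = 1)%g -> (t * t = 1)%g ->
  Xalt act i xs xt s t w != 0 ->
  exists j, (j <= i)%N /\ (w = sword j s t \/ w = sword j t s).
Proof.
move=> ha; elim: i => [|i IH] s t xs xt w hs ht.
  rewrite /= /delta ffunE; case: (eqVneq w 1%g) => [->|_]; last by rewrite eqxx.
  by exists 0%N; split => //; left.
rewrite Xrec //.
have hsi : (s^-1 = s)%g by rewrite inv_inv.
case: (eqVneq (Xalt act i xt xs t s w) 0) => [h0|h1].
  case: (eqVneq (Xalt act i xt xs t s (s^-1 * w)%g) 0) => [h0'|h1'].
    by rewrite h0 h0' act0 // !mulr0 subr0 eqxx.
  move=> _; have [j [hj [e|e]]] := IH t s xt xs _ ht hs h1';
    have ew : w = (s * (s^-1 * w))%g by rewrite mulKVg.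
  - by exists j.+1; split => //; left; rewrite ew e.
  - case: j hj e => [|j] hj e.
      by exists 1%N; split => //; left; rewrite ew e.
    exists j; split; first lia.
    by right; rewrite ew e /= mulgA hs mul1g.
move=> _; have [j [hj [e|e]]] := IH t s xt xs _ ht hs h1.
- by exists j; split; [lia | right].
- by exists j; split; [lia | left].
Qed.


Lemma ordSwap (W : finGroupType) (s t : W) (m : nat) :
  (s * s = 1)%g -> (t * t = 1)%g -> #[(s*t)%g]%g = m -> #[(t*s)%g]%g = m.
Proof.
move=> hs ht ho; have e1 : ((s*t)^-1 = t * s)%g by rewrite invgM !inv_inv.
by rewrite -e1 orderV.
Qed.

Lemma Van (W : finGroupType) (Q : comUnitRingType) (act : W -> Q -> Q) m i s t xs xt :
  ring_action act -> (s * s = 1)%g -> (t * t = 1)%g -> #[(s*t)%g]%g = m -> (3 <= m)%N ->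
  (i.+1 < m)%N -> Xalt act i xs xt s t (sword i.+1 t s) = 0.
Proof.
move=> ha hs ht ho hm him.
case: (eqVneq (Xalt act i xs xt s t (sword i.+1 t s)) 0) => // hne; exfalso.
have [j [hj [e|e]]] := Supp ha hs ht hne;
  have [d1 d2] := Dist (j:=j) (k:=i.+1) ht hs (ordSwap hs ht ho) hm (leq_ltn_trans hj (ltnSn _)) him.
- by rewrite e eqxx in d2.
- by rewrite e eqxx in d1.
Qed.

Definition Pr (W : finGroupType) (Q : comUnitRingType) (act : W -> Q -> Q)
    (i : nat) (ys yt : Q) (s t : W) : Q :=
  \prod_(j < i) act (sword j s t) (if odd j then yt else ys).

Lemma PrS (W : finGroupType) (Q : comUnitRingType) (act : W -> Q -> Q) i ys yt s t :
  ring_action act -> Pr act i.+1 ys yt s t = ys * act s (Pr act i yt ys t s).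
Proof.
move=> ha; have [_ hmul _ hid hcomp] := ha.
rewrite /Pr big_ord_recl /= hid actP //; congr (_ * _).
apply: eq_bigr => j _; rewrite /= hcomp.
by case: (odd j).
Qed.

Lemma SsumS (W : finGroupType) (Q : comUnitRingType) (act : W -> Q -> Q) k s t u :
  ring_action act -> Ssum act 0 k.+1 s t u = u + act s (Ssum act 0 k t s u).
Proof.
move=> ha; have [_ _ _ hid hcomp] := ha.
rewrite /Ssum big_nat_recl // /= hid actS //; congr (_ + _).
by apply: eq_bigr => j _; rewrite hcomp.
Qed.

Lemma Tcl (W : finGroupType) (Q : comUnitRingType) (act : W -> Q -> Q) m i :
  ring_action act -> (3 <= m)%N -> (i < m)%N -> forall s t xs xt,
  (s * s = 1)%g -> (t * t = 1)%g -> #[(s*t)%g]%g = m ->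
  Xalt act i xs xt s t (sword i s t) = (-1) ^+ i * Pr act i xs^-1 xt^-1 s t.
Proof.
move=> ha hm; have [_ hmul _ hid hcomp] := ha.
elim: i => [|i IH] him s t xs xt hs ht ho.
  by rewrite /= /delta ffunE eqxx /Pr big_ord0 expr0 mulr1.
rewrite Xrec // (Van xt xs ha ht hs (ordSwap hs ht ho) hm him).
rewrite [sword i.+1 s t]/= mulKg (IH (ltnW him) t s xt xs ht hs (ordSwap hs ht ho)).
rewrite hmul actS1 // PrS // exprS; ring.
Qed.

Lemma Fcl (W : finGroupType) (Q : comUnitRingType) (act : W -> Q -> Q) m i :
  ring_action act -> (3 <= m)%N -> (i.+1 < m)%N -> forall s t xs xt,
  (s * s = 1)%g -> (t * t = 1)%g -> #[(s*t)%g]%g = m ->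
  Xalt act i.+1 xs xt s t (sword i t s) = xs^-1 * ((-1) ^+ i * Pr act i xt^-1 xs^-1 t s).
Proof.
move=> ha hm him s t xs xt hs ht ho.
rewrite Xrec // inv_inv //.
rewrite -[(s * sword i t s)%g]/(sword i.+1 s t) (Van xt xs ha ht hs (ordSwap hs ht ho) hm him).
rewrite act0 // mulr0 subr0 (Tcl ha hm (ltnW him) xt xs ht hs (ordSwap hs ht ho)).
by [].
Qed.

Lemma Gcl (W : finGroupType) (Q : comUnitRingType) (act : W -> Q -> Q) m k :
  ring_action act -> (3 <= m)%N -> (k.+2 <= m)%N -> forall s t xs xt,
  (s * s = 1)%g -> (t * t = 1)%g -> #[(s*t)%g]%g = m ->
  Xalt act k.+2 xs xt s t (sword k s t)
   = (-1) ^+ k * Pr act k xs^-1 xt^-1 s t * Ssum act 0 k s t (xs^-1 * xt^-1).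
Proof.
move=> ha hm; have [_ hmul _ hid hcomp] := ha.
elim: k => [|k IH] hkm s t xs xt hs ht ho.
  rewrite Xrec //.
  rewrite [sword 0 s t]/= (Fcl ha hm hkm xt xs ht hs (ordSwap hs ht ho)).
  rewrite Xrec // [Xalt _ 0 _ _ _ _]/= /delta !ffunE.
  have [d1 _] := Dist (j:=0) (k:=1) hs ht ho hm (ltnSn _) hkm.
  have [d2 _] := Dist (j:=0) (k:=2) hs ht ho hm isT hm.
  have -> : ((s^-1 * 1)%g == 1%g) = false.
    by apply/negbTE; rewrite mulg1 inv_inv //; rewrite /= mulg1 in d1.
  have -> : ((t^-1 * (s^-1 * 1))%g == 1%g) = false.
    apply/negbTE; rewrite mulg1 -invgM; apply/negP => /eqP h.
    by move: d2; rewrite /= mulg1 -(invgK (s * t)%g) h invg1 eqxx.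
  rewrite (act0 _ ha) !mulr0 subr0 (act0 _ ha) mulr0 subr0 /Pr /Ssum big_ord0 big_nat1 /= hid expr0.
  ring.
rewrite Xrec //.
rewrite (Fcl ha hm hkm xt xs ht hs (ordSwap hs ht ho)).
rewrite [sword k.+1 s t]/= mulKg (IH (ltnW hkm) t s xt xs ht hs (ordSwap hs ht ho)).
rewrite !hmul actS1 // PrS // SsumS // [xt^-1 * xs^-1]mulrC exprS.
ring.
Qed.

Lemma sq1 (W : finGroupType) (s : W) : #[s]%g = 2%N -> (s * s = 1)%g.
Proof. by move=> h; have := expg_order s; rewrite h expgS expg1. Qed.

Theorem lemma6p3 (m : nat) (W : finGroupType) (sa sb : W)
    (Q : comUnitRingType) (act : W -> Q -> Q) (xa xb : Q) :
  (3 <= m)%N ->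
  #[sa]%g = 2%N -> #[sb]%g = 2%N -> #[(sa * sb)%g]%g = m ->
  <<[set sa; sb]>>%g = [set: W] ->
  ring_action act ->
  xa \is a GRing.unit -> xb \is a GRing.unit ->
  Xalt act m xa xb sa sb (sword (m - 2) sa sb)
    = (-1) ^+ odd m * upsilon act m 2 xa^-1 xb^-1 sa sb
        * Ssum act 0 (m - 2) sa sb (xa^-1 * xb^-1)
  /\
  Xalt act m xb xa sb sa (sword (m - 2) sb sa)
    = (-1) ^+ odd m * upsilon act m 2 xb^-1 xa^-1 sb sa
        * Ssum act 0 (m - 2) sb sa (xb^-1 * xa^-1).
Proof.
move=> hm ha2 hb2 ho _ hact _ _.
have hs := sq1 ha2; have ht := sq1 hb2.
have ho' := ordSwap hs ht ho.
have Em : m = (m - 2).+2 by lia.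
have hk : ((m - 2).+2 <= m)%N by lia.
rewrite signr_odd /upsilon -/(Pr act (m - 2) _ _ sa sb) -/(Pr act (m - 2) _ _ sb sa).
have -> : (-1) ^+ m = (-1) ^+ (m - 2) :> Q by rewrite {1}Em !exprS !mulN1r opprK.
split; rewrite {1}Em.
- exact: (Gcl hact hm hk xa xb hs ht ho).
- exact: (Gcl hact hm hk xb xa ht hs ho').
Qed.
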